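(* Let $K$ be a field complete with respect to a discrete valuation with perfect residue field of characteristic $p>0$, and let $L/K$ be a totally ramified Galois extension of degree $p$ with (lower) ramification break $b_1$. If $K$ has characteristic $p$, then $L/K$ has a Galois scaffold of tolerance $\mathfrak{T}=\infty$. If $K$ has characteristic $0$ and $b_1\ne pv_K(p)/(p-1)$, then $L/K$ has a Galois scaffold of tolerance $\mathfrak{T}=pv_K(p)-(p-1)b_1\ge1$.
   Context: $v_K,v_L$ are the normalized valuations of $K,L$; $\mathfrak{O}_K,\mathfrak{O}_L$ valuation rings, $\mathfrak{P}_L$ maximal ideal of $\mathfrak{O}_L$. For a totally ramified Galois extension $L/K$ of degree $p^n$ with group $G$, the ramification groups are $G_j=\{\sigma\in G:(\sigma-1)\mathfrak{O}_L\subseteq\mathfrak{P}_L^{j+1}\}$ and the lower ramification breaks counted with multiplicity are $b_i=\max\{j:|G_j|>p^{n-i}\}$, $1\le i\le n$. Let $\mathbb{S}_{p^n}=\{0,\dots,p^n-1\}$ with base-$p$ digits $s=\sum_{i=1}^n s_{(n-i)}p^{n-i}$. For integers $b_1,\dots,b_n$ prime to $p$, $\mathfrak{b}(s)=\sum_i s_{(n-i)}p^{n-i}b_i$, and $\mathfrak{a}(t)\in\mathbb{S}_{p^n}$ (for $t\in\mathbb{Z}$) is the unique element with $\mathfrak{b}(\mathfrak{a}(t))\equiv-t\pmod{p^n}$. A $K[G]$-scaffold on $L$ of tolerance $\mathfrak{T}\ge1$ (possibly $\infty$) with shift parameters $b_1,\dots,b_n$ consists of: (i) $\lambda_t\in L$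 ($t\in\mathbb{Z}$) with $v_L(\lambda_t)=t$ and $\lambda_{t_1}\lambda_{t_2}^{-1}\in K$ whenever $t_1\equiv t_2\pmod{p^n}$; (ii) $\Psi_1,\dots,\Psi_n\in K[G]$ with $\Psi_i\cdot1=0$ such that for each $i,t$ there is $u_{i,t}\in\mathfrak{O}_K^\times$ with $\Psi_i\cdot\lambda_t\equiv u_{i,t}\lambda_{t+p^{n-i}b_i}$ if $\mathfrak{a}(t)_{(n-i)}\ge1$ and $\equiv0$ if $\mathfrak{a}(t)_{(n-i)}=0$, modulo $\lambda_{t+p^{n-i}b_i}\mathfrak{P}_L^{\mathfrak{T}}$ (equalities if $\mathfrak{T}=\infty$). A Galois scaffold is a $K[G]$-scaffold (with $K[G]$ acting on $L$ in the usual way, residue field perfect) whose shift parameters are the lower ramification breaks $b_1,\dots,b_n$ of $L/K$. *)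

(* Defs.v *)
From HB Require Import structures.
From mathcomp Require Import all_boot all_order all_algebra all_fingroup all_field.
From mathcomp Require Import boolp.
Set Implicit Arguments.
Unset Strict Implicit.
Unset Printing Implicit Defensive.
Import Order.TTheory GRing.Theory Num.Theory.
Local Open Scope ring_scope.

(* x lies in P^N for the valuation v (value of v at 0 is irrelevant). *)
Definition vge (F : fieldType) (v : F -> int) (x : F) (N : int) : Prop :=
  x = 0 \/ N <= v x.

Definition is_normalized_dval (F : fieldType) (v : F -> int) : Prop :=
  [/\ (forall x y, x != 0 -> y != 0 -> v (x * y) = v x + v y),
      (forall x y, x != 0 -> y != 0 -> x + y != 0 ->
                  Num.min (v x) (v y) <= v (x + y)) &
      exists pi, pi != 0 /\ v pi = 1 ].

Definition complete_wrt (F : fieldType) (v : F -> int) : Prop :=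
  forall u : nat -> F,
    (forall N : int, exists M, forall m k, (M <= m)%N -> (M <= k)%N ->
         vge v (u m - u k) N) ->
    exists l, forall N : int, exists M, forall m, (M <= m)%N -> vge v (u m - l) N.

Definition residue_perfect (F : fieldType) (v : F -> int) (p : nat) : Prop :=
  forall x, vge v x 0 -> exists y, vge v y 0 /\ vge v (x - y ^+ p) 1.

Section Scaffold.
Variables (K : fieldType) (L : splittingFieldType K).
Variables (vK : K -> int) (vL : L -> int) (p : nat).

(* Elements of the group algebra K[G], G = Gal(L/K) = gal_of {:L}. *)
Definition Kgroupalg := {ffun gal_of {:L} -> K}.

Definition kg_act (Psi : Kgroupalg) (x : L) : L :=
  \sum_(s : gal_of {:L}) Psi s *: s x.

Definition digit (s k : nat) : nat := (s %/ p ^ k) %% p.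

Definition bfun (n : nat) (b : nat -> int) (s : nat) : int :=
  \sum_(1 <= i < n.+1) ((digit s (n - i) * p ^ (n - i))%N)%:Z * b i.

Definition afun (n : nat) (b : nat -> int) (t : int) : nat :=
  find (fun s => ((bfun n b s + t) %% (p ^ n)%N%:Z)%Z == 0) (iota 0 (p ^ n)).

(* x = z mod y * P_L^T ; T = None stands for infinity (equality). *)
Definition congr_mod (T : option int) (y x z : L) : Prop :=
  match T with
  | None => x = z
  | Some T => exists w, vge vL w T /\ x - z = y * w
  end.

Definition tol_ge1 (T : option int) : Prop :=
  match T with None => True | Some T => 1 <= T end.

Definition is_scaffold (n : nat) (b : nat -> int) (T : option int)
    (lam : int -> L) (Psi : nat -> Kgroupalg) : Prop :=
  (forall i, (1 <= i <= n)%N -> ~~ (((p%:Z) %| b i)%Z)) /\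
  tol_ge1 T /\
  (forall t, lam t != 0 /\ vL (lam t) = t) /\
  (forall t1 t2, (t1 == t2 %[mod (p ^ n)%N%:Z])%Z ->
        exists a : K, lam t1 / lam t2 = a%:A) /\
  (forall i, (1 <= i <= n)%N -> kg_act (Psi i) 1 = 0) /\
  (forall i t, (1 <= i <= n)%N ->
        exists u : K, [/\ u != 0, vK u = 0 &
          (if (0 < digit (afun n b t) (n - i))%N
           then congr_mod T (lam (t + (p ^ (n - i))%N%:Z * b i))
                 (kg_act (Psi i) (lam t)) (u%:A * lam (t + (p ^ (n - i))%N%:Z * b i))
           else congr_mod T (lam (t + (p ^ (n - i))%N%:Z * b i))
                 (kg_act (Psi i) (lam t)) 0)]).

Definition ram_group (j : int) : {set gal_of {:L}} :=
  [set s : gal_of {:L} | `[< forall x, vge vL x 0 -> vge vL (s x - x) (j + 1) >]].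

Definition lower_break (n i : nat) (b : int) : Prop :=
  (p ^ (n - i) < #|ram_group b|)%N /\
  forall j : int, (p ^ (n - i) < #|ram_group j|)%N -> j <= b.

Definition galois_scaffold (n : nat) (T : option int) : Prop :=
  exists b : nat -> int,
    (forall i, (1 <= i <= n)%N -> lower_break n i (b i)) /\
    exists (lam : int -> L) (Psi : nat -> Kgroupalg), is_scaffold n b T lam Psi.

End Scaffold.

(* Main.v *)
Require Import Defs.
From HB Require Import structures.
From mathcomp Require Import all_boot all_order all_algebra all_fingroup all_field.
From mathcomp Require Import zify ring.
From mathcomp Require Import boolp.
Set Implicit Arguments.
Unset Strict Implicit.
Unset Printing Implicit Defensive.
Import Order.TTheory GRing.Theory Num.Theory FalgLfun.
Local Open Scope ring_scope.

Section Val.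
Variables (F : fieldType) (v : F -> int).
Hypothesis hv : is_normalized_dval v.

Lemma vM x y : x != 0 -> y != 0 -> v (x * y) = v x + v y.
Proof. by case: hv => h _ _; apply: h. Qed.

Lemma vU x y : x != 0 -> y != 0 -> x + y != 0 -> Num.min (v x) (v y) <= v (x + y).
Proof. by case: hv => _ h _; apply: h. Qed.

Lemma v1 : v 1 = 0.
Proof. have h : v (1 * 1) = v 1 + v 1 by apply: vM; rewrite oner_neq0.
rewrite mulr1 in h; lia. Qed.

Lemma vV x : x != 0 -> v x^-1 = - v x.
Proof.
move=> x0; have h : v (x * x^-1) = v x + v x^-1 by apply: vM; rewrite ?invr_eq0.
rewrite mulfV // v1 in h; lia.
Qed.

Lemma vN1 : v (-1) = 0.
Proof.
have n0 : (-1 : F) != 0 by rewrite oppr_eq0 oner_neq0.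
have h : v (-1 * -1) = v (-1) + v (-1) by apply: vM.
rewrite mulrNN mulr1 v1 in h; lia.
Qed.

Lemma vN x : v (- x) = v x.
Proof.
have [->|x0] := eqVneq x 0; first by rewrite oppr0.
have n0 : (-1 : F) != 0 by rewrite oppr_eq0 oner_neq0.
by rewrite -mulN1r vM // vN1 add0r.
Qed.

Lemma vX x n : x != 0 -> v (x ^+ n) = n%:Z * v x.
Proof.
move=> x0; elim: n => [|n IH]; first by rewrite expr0 v1 mul0r.
rewrite exprS vM ?expf_neq0 // IH; lia.
Qed.

Lemma vXz x (m : int) : x != 0 -> v (x ^ m) = m * v x.
Proof.
move=> x0; case: m => n.
  by rewrite -exprnP vX.
rewrite NegzE -exprnN vV ?expf_neq0 // vX //; lia.
Qed.

Lemma vge0 N : vge v 0 N. Proof. by left. Qed.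

Lemma vgeW N M x : M <= N -> vge v x N -> vge v x M.
Proof. move=> le [->|h]; [by left| right; lia]. Qed.

Lemma vgeE x N : x != 0 -> vge v x N <-> N <= v x.
Proof. by move=> x0; split; [case=> // /eqP; rewrite (negPf x0)| right]. Qed.

Lemma vge_v x : vge v x (v x). Proof. by right. Qed.

Lemma vgeN x N : vge v x N -> vge v (- x) N.
Proof. by case=> [->|h]; [left; rewrite oppr0| right; rewrite vN]. Qed.

Lemma vgeD x y N : vge v x N -> vge v y N -> vge v (x + y) N.
Proof.
case=> [->|hx]; first by rewrite add0r.
case=> [->|hy]; first by rewrite addr0; right.
have [->|s0] := eqVneq (x + y) 0; first by left.
right; have [->|x0] := eqVneq x 0; first by rewrite add0r.
have [->|y0] := eqVneq y 0; first by rewrite addr0.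
have := vU x0 y0 s0; rewrite ge_min => /orP[] h; [exact: le_trans hx h | exact: le_trans hy h].
Qed.

Lemma vgeB x y N : vge v x N -> vge v y N -> vge v (x - y) N.
Proof. by move=> hx hy; apply: vgeD => //; apply: vgeN. Qed.

Lemma vgeM x y N M : vge v x N -> vge v y M -> vge v (x * y) (N + M).
Proof.
case=> [->|hx]; first by rewrite mul0r; left.
case=> [->|hy]; first by rewrite mulr0; left.
have [->|x0] := eqVneq x 0; first by rewrite mul0r; left.
have [->|y0] := eqVneq y 0; first by rewrite mulr0; left.
right; rewrite vM //; lia.
Qed.

Lemma vge_sum (I : Type) (r : seq I) (P : pred I) (f : I -> F) N :
  (forall i, P i -> vge v (f i) N) -> vge v (\sum_(i <- r | P i) f i) N.
Proof.
move=> h; elim/big_rec: _ => [|i x Pi hx]; first by left.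
by apply: vgeD => //; apply: h.
Qed.

Lemma vge_dom x y : x != 0 -> vge v y (v x + 1) -> x + y != 0 /\ v (x + y) = v x.
Proof.
move=> x0 [->|hy]; first by rewrite addr0.
have [y0|y0] := eqVneq y 0; first by rewrite y0 addr0.
have s0 : x + y != 0.
  apply/negP => /eqP h; have : y = - x by apply/eqP; rewrite -subr_eq0 opprK addrC h.
  by move=> e; move: hy; rewrite e vN; lia.
split=> //; have h1 := vU x0 y0 s0.
have ny0 : - y != 0 by rewrite oppr_eq0.
have h2 : Num.min (v (x+y)) (v (-y)) <= v (x + y + - y) by apply: vU => //; rewrite addrK.
rewrite addrK vN in h2.
move: h1 h2; rewrite !ge_min => /orP[] h1 /orP[] h2; lia.
Qed.

Lemma vge_nat n : vge v n%:R 0.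
Proof.
elim: n => [|n IH]; first by left.
rewrite -addn1 natrD; apply: vgeD => //; right; rewrite v1 //.
Qed.

Lemma vge_int (z : int) : vge v z%:~R 0.
Proof. by case: z => n; rewrite ?NegzE ?mulrNz; [apply: vge_nat| apply/vgeN/vge_nat]. Qed.

Lemma v_unit_nat (p n : nat) : prime p -> vge v p%:R 1 -> ~~ (p %| n)%N ->
  n%:R != 0 :> F /\ v n%:R = 0.
Proof.
move=> pp hp ndvd.
have [a _ /dvdnP[q hq]] := Bezoutl n (prime_gt0 pp).
have g1 : gcdn p n = 1%N by apply/eqP; rewrite -/(coprime p n) prime_coprime.
rewrite g1 in hq.
have e : n%:R * a%:R = - 1 + (q%:R * p%:R) :> F.
  by rewrite -!natrM -hq natrD addKr mulnC.
have hv1 : vge v (q%:R * p%:R : F) (v (-1 : F) + 1).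
  by rewrite vN1 add0r; have := vgeM (vge_nat q) hp; rewrite add0r.
have n1 : (-1 : F) != 0 by rewrite oppr_eq0 oner_eq0.
have [nz ve] := vge_dom n1 hv1.
rewrite -e in nz ve.
have n0 : n%:R != 0 :> F by apply: contraNneq nz => ->; rewrite mul0r.
have a0 : a%:R != 0 :> F by apply: contraNneq nz => ->; rewrite mulr0.
split=> //; rewrite vM // vN1 in ve.
have := (proj1 (vgeE _ n0) (vge_nat n)); have := (proj1 (vgeE _ a0) (vge_nat a)).
move: ve; set A := v (a%:R); set B := v (n%:R); lia.
Qed.


Lemma binom_mid (p : nat) (g : F) : (0 < p)%N ->
  (g + 1) ^+ p - 1 - g ^+ p = \sum_(1 <= i < p) g ^+ i *+ 'C(p, i).
Proof.
move=> p0; rewrite exprD1n -(big_mkord xpredT (fun i => g ^+ i *+ 'C(p, i))).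
rewrite big_nat_recr //= big_ltn // expr0 bin0 binn mulr1n.
by set S := \sum_(1 <= i < p) _; ring.
Qed.

Lemma vge_binp (p : nat) (d : F) : prime p -> vge v p%:R 1 -> vge v d 0 ->
  vge v (d ^+ p - 1 - (d - 1) ^+ p) 1.
Proof.
move=> pp hp hd; have -> : d = (d - 1) + 1 by rewrite subrK.
rewrite addrK binom_mid ?prime_gt0 //.
rewrite big_seq; apply: vge_sum => i; rewrite mem_index_iota => /andP[i1 ip].
have /dvdnP[m hm] := prime_dvd_bin pp (introT andP (conj i1 ip)); move: (ip).
rewrite -mulr_natr hm natrM => _.
have hg : vge v (d - 1) 0 by apply: vgeB => //; right; rewrite v1.
have hgi : vge v ((d - 1) ^+ i) 0.
  elim: (i) => [|n IH]; first by right; rewrite expr0 v1.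
  by rewrite exprS; have := vgeM hg IH; rewrite addr0.
have := vgeM hgi (vgeM (vge_nat m) hp); rewrite !add0r; by [].
Qed.

End Val.


Section Afun.
Variables (p : nat) (beta : int).
Hypotheses (pp : prime p) (hnd : ~~ (p%:Z %| beta)%Z).

Lemma small_dvd (x : int) : (p%:Z %| x)%Z -> - p%:Z < x -> x < p%:Z -> x = 0.
Proof.
move=> /dvdzP[q ->] h1 h2; have p0 := prime_gt0 pp.
case: (ltgtP q 0) => hq.
- have : (q + 1) * p%:Z <= 0 * p%:Z by apply: ler_wpM2r; lia.
  lia.
- have : 1 * p%:Z <= q * p%:Z by apply: ler_wpM2r; lia.
  lia.
- by rewrite hq mul0r.
Qed.

Lemma cop : coprimez p%:Z beta.
Proof. by rewrite coprimezE prime_coprime. Qed.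

Lemma good_uniq (s1 s2 : nat) (t : int) : (s1 < p)%N -> (s2 < p)%N ->
  (p%:Z %| s1%:Z * beta + t)%Z -> (p%:Z %| s2%:Z * beta + t)%Z -> s1 = s2.
Proof.
move=> h1 h2 d1 d2.
have : (p%:Z %| (s1%:Z - s2%:Z) * beta)%Z.
  have -> : (s1%:Z - s2%:Z) * beta = (s1%:Z * beta + t) - (s2%:Z * beta + t) by ring.
  exact: rpredB.
rewrite Gauss_dvdzl ?cop // => /small_dvd h.
have : s1%:Z - s2%:Z = 0 by apply: h; lia.
lia.
Qed.

Lemma good_ex (t : int) : exists s0 : nat, (s0 < p)%N /\ (p%:Z %| s0%:Z * beta + t)%Z.
Proof.
have p0 := prime_gt0 pp.
have pz0 : p%:Z != 0 by rewrite eqz_nat -lt0n.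
have [[u v] /= huv] := coprimezP _ _ cop.
set r := ((- t * v) %% p%:Z)%Z.
have r0 : 0 <= r by apply: modz_ge0.
have rp : r < p%:Z by apply: ltz_pmod; rewrite ltz_nat.
exists `|r|%N; rewrite abszE ger0_norm //; split; first by rewrite -ltz_nat abszE ger0_norm.
have er : r = - t * v - ((- t * v) %/ p%:Z)%Z * p%:Z by rewrite /r {2}(divz_eq (- t * v) p%:Z) addrC addKr.
apply/dvdzP; exists (t * u - ((- t * v) %/ p%:Z)%Z * beta).
rewrite er; set D := ((- t * v) %/ p%:Z)%Z.
apply/eqP; rewrite -subr_eq0 (_ : _ - _ = t * (1 - (u * p%:Z + v * beta))).
  by rewrite huv subrr mulr0.
ring.
Qed.

Definition bb : nat -> int := fun _ => beta.
Definition af t := afun p 1 bb t.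

Lemma bfun1 s0 : bfun p 1 bb s0 = (s0 %% p)%N%:Z * beta.
Proof. by rewrite /bfun big_nat1 subnn /digit expn0 divn1 muln1. Qed.

Lemma af_spec t : (af t < p)%N /\ (p%:Z %| (af t)%:Z * beta + t)%Z.
Proof.
have [s0 [s0p hs0]] := good_ex t.
set P := (fun s => ((bfun p 1 bb s + t) %% (p ^ 1)%N%:Z)%Z == 0).
have hP : forall s, (s < p)%N -> P s = (p%:Z %| s%:Z * beta + t)%Z.
  move=> s sp; rewrite /P bfun1 expn1 modn_small //.
  by apply/idP/idP => [/eqP/dvdz_mod0P | /dvdz_mod0P/eqP].
have hh : has P (iota 0 p).
  by apply/hasP; exists s0; [rewrite mem_iota | rewrite hP].
have := has_find P (iota 0 p); rewrite hh size_iota => /esym fp.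
have := nth_find 0 hh; rewrite nth_iota // add0n.
rewrite /af /afun expn1 -/P in fp *.
by move=> h; split=> //; rewrite -hP.
Qed.

End Afun.


Lemma ex_min (I : finType) (P : pred I) (f : I -> int) :
  (exists i, P i) -> exists j, P j /\ forall i, P i -> f j <= f i.
Proof. case=> i0 Pi0; case: (arg_minP f Pi0) => j Pj h; by exists j. Qed.

Section Basis.
Variables (K : fieldType) (L : splittingFieldType K) (vK : K -> int) (vL : L -> int) (p : nat).
Hypotheses (hvK : is_normalized_dval vK) (pp : prime p) (hvL : is_normalized_dval vL)
  (hKL : forall a : K, a != 0 -> vL a%:A = p%:Z * vK a) (hdim : \dim {:L} = p).
Variables (pi : L).
Variables (cc : K).
Hypotheses (pi0 : pi != 0) (hpi : vL pi = 1) (cc0 : cc != 0) (hcc : vK cc = 1).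

Lemma alg_neq0 (a : K) : a != 0 -> a%:A != 0 :> L.
Proof. by move=> a0; rewrite scaler_eq0 negb_or a0 oner_neq0. Qed.

Lemma vterm (c : K) (i : nat) : c != 0 ->
  c *: pi ^+ i != 0 /\ vL (c *: pi ^+ i) = p%:Z * vK c + i%:Z.
Proof.
move=> c0; have pn : pi ^+ i != 0 by rewrite expf_neq0.
rewrite -mulr_algl; split; first by rewrite mulf_neq0 // alg_neq0.
by rewrite (vM hvL) ?alg_neq0 // hKL // (vX hvL) // hpi mulr1.
Qed.

Lemma distinct_res (x y : int) (i j : nat) : (i < p)%N -> (j < p)%N ->
  p%:Z * x + i%:Z = p%:Z * y + j%:Z -> i = j.
Proof.
move=> ip jp e; have p0 := prime_gt0 pp.
case: (ltgtP x y) => h.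
- have : p%:Z * (x + 1) <= p%:Z * y by apply: ler_wpM2l; lia.
  lia.
- have : p%:Z * (y + 1) <= p%:Z * x by apply: ler_wpM2l; lia.
  lia.
- by subst; apply/eqP; rewrite -(eqz_nat i j); apply/eqP; lia.
Qed.

Lemma nn_of (x : int) (i : nat) : (i < p)%N -> 0 <= p%:Z * x + i%:Z -> 0 <= x.
Proof.
move=> ip h; have p0 := prime_gt0 pp; case: (lerP 0 x) => // hx.
have : p%:Z * (x + 1) <= p%:Z * 0 by apply: ler_wpM2l; lia.
lia.
Qed.

Definition dsum (c : 'I_p -> K) := \sum_(i < p) c i *: pi ^+ i.
Definition fv (c : 'I_p -> K) (i : 'I_p) := p%:Z * vK (c i) + (i : nat)%:Z.

Lemma dsum_min (c : 'I_p -> K) (j : 'I_p) : c j != 0 ->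
  (forall i, c i != 0 -> fv c j <= fv c i) ->
  dsum c != 0 /\ vL (dsum c) = fv c j.
Proof.
move=> cj hmin; rewrite /dsum (bigD1 j) //=.
have [t0 tv] := @vterm (c j) j cj.
have := @vge_dom _ _ hvL (c j *: pi ^+ j) (\sum_(i < p | i != j) c i *: pi ^+ i) t0.
rewrite tv => h; apply: h; apply: (vge_sum hvL) => i ij.
have [->|ci] := eqVneq (c i) 0; first by rewrite scale0r; left.
have [_ ti] := @vterm (c i) i ci; right; rewrite ti.
have := hmin i ci; rewrite /fv => le.
have ne : p%:Z * vK (c j) + j%:Z != p%:Z * vK (c i) + i%:Z.
  apply/eqP => /(distinct_res (ltn_ord j) (ltn_ord i)) /val_inj e.
  by move: ij; rewrite e eqxx.
move: le ne; set A := p%:Z * vK (c j) + j%:Z; set B := p%:Z * vK (c i) + i%:Z.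
rewrite neq_lt => a /orP[] b; lia.
Qed.

Lemma dsum_val (c : 'I_p -> K) (i : 'I_p) : c i != 0 ->
  dsum c != 0 /\ vL (dsum c) <= fv c i.
Proof.
move=> ci; have [j [cj hj]] := ex_min (fv c) (ex_intro (fun i => c i != 0) i ci).
have [d0 dv] := dsum_min cj hj; split=> //; rewrite dv; exact: hj.
Qed.

Definition Xp := [tuple pi ^+ (i : nat) | i < p].

Lemma Xp_nth (i : 'I_p) : Xp`_i = pi ^+ i.
Proof. by rewrite -tnth_nth tnth_mktuple. Qed.

Lemma free_Xp : free Xp.
Proof.
apply/freeP => k hk i; apply/eqP; apply: contraT => ki.
have [h _] := dsum_val ki; move: h; rewrite /dsum.
under eq_bigr do rewrite -Xp_nth.
by rewrite hk eqxx.
Qed.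

Lemma basis_Xp : basis_of {:L} Xp.
Proof. by rewrite basisEfree free_Xp subvf size_tuple hdim leqnn. Qed.

Lemma decomp (z : L) : exists c : 'I_p -> K, z = dsum c.
Proof.
exists (fun i => coord Xp i z); rewrite /dsum {1}(coord_basis basis_Xp (memvf z)).
by apply: eq_bigr => i _; rewrite Xp_nth.
Qed.

Lemma dsum0 c : dsum c = 0 -> forall i, c i = 0.
Proof. move=> h i; apply/eqP; apply: contraT => ci; have [] := dsum_val ci; by rewrite h eqxx. Qed.

Lemma dsum_O c : vge vL (dsum c) 0 -> forall i, vge vK (c i) 0.
Proof.
move=> h i; have [ci|ci] := eqVneq (c i) 0; first by left.
have [d0 dv] := dsum_val ci; right; move: h => [/eqP|]; first by rewrite (negPf d0).
rewrite /fv in dv; move=> h; apply: (nn_of (ltn_ord i)); exact: le_trans h dv.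
Qed.

Lemma res_trivial (w : L) : vge vL w 0 -> exists d : K, vge vL (w - d%:A) 1.
Proof.
have p0 := prime_gt0 pp; set i0 : 'I_p := Ordinal p0.
have [c ->] := decomp w => h; exists (c i0).
rewrite /dsum (bigD1 i0) //= expr0 addrAC subrr add0r.
apply: (vge_sum hvL) => i ii0.
have [->|ci] := eqVneq (c i) 0; first by rewrite scale0r; left.
have [_ ti] := @vterm (c i) i ci; right; rewrite ti.
have [_ dv] := dsum_val ci; move: h => [/eqP|h].
  by rewrite (negPf (proj1 (dsum_val ci))).
have ip := ltn_ord i; have i1 : (0 < i)%N by rewrite lt0n; apply: contra ii0 => /eqP e; apply/eqP/val_inj.
rewrite /fv in dv; have := nn_of ip (le_trans h dv).
move: i1; set x := vK (c i); move: (i : nat) => n; lia.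
Qed.

Lemma gal_neq0 (t : gal_of {:L}) x : x != 0 -> t x != 0.
Proof. by rewrite fmorph_eq0. Qed.

Lemma vge_alg (a : K) N : vge vK a N -> vge vL a%:A (p%:Z * N).
Proof.
case=> [->|h]; first by rewrite scale0r; left.
have [->|a0] := eqVneq a 0; first by rewrite scale0r; left.
right; rewrite hKL //; apply: ler_wpM2l => //.
Qed.

Lemma inv_O (t : gal_of {:L}) y : vge vL y 0 -> vge vL (t y) 0.
Proof.
move=> hy; have [->|ty0] := eqVneq (t y) 0; first by left.
have tp0 := gal_neq0 t pi0; set r := vL (t pi).
set B := - (p%:Z * `|r|).
have hn : forall n, vge vL ((t y) ^+ n) B.
  move=> n; have [c hc] := decomp (y ^+ n).
  have hO : vge vL (dsum c) 0.
    rewrite -hc; elim: n {hc} => [|n IH]; first by rewrite expr0; right; rewrite (v1 hvL).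
    by rewrite exprS; have := vgeM hvL hy IH; rewrite addr0.
  have cO := dsum_O hO.
  rewrite -rmorphXn hc /dsum rmorph_sum /=; apply: (vge_sum hvL) => i _.
  rewrite linearZ /= rmorphXn -mulr_algl.
  have := vgeM hvL (vge_alg (cO i)) (vge_v vL ((t pi) ^+ i)).
  rewrite mulr0 add0r (vX hvL) //; apply: vgeW.
  have ip := ltn_ord i; rewrite /B.
  have : `|r| * (i : nat)%:Z <= `|r| * p%:Z by apply: ler_wpM2l => //; lia.
  have : - `|r| <= r by lia.
  move: (i : nat) ip => k ip; set R := `|r|. move=> h1 h2.
  have : - R * k%:Z <= r * k%:Z by apply: ler_wpM2r => //.
  lia.
right; apply: contraT; rewrite -ltNge => neg.
set n := `|B|.+1.
have := hn n; rewrite (vgeE vL) ?expf_neq0 // (vX hvL) //.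
have : n%:Z * vL (t y) <= n%:Z * (-1) by apply: ler_wpM2l => //; lia.
rewrite /n /B; move: (vL (t y)) => q; lia.
Qed.

Lemma galVK (t : gal_of {:L}) x : (t^-1)%g (t x) = x.
Proof. by rewrite -galM ?memvf // mulgV gal_id. Qed.

Lemma gal_X (t : gal_of {:L}) x n : t (x ^+ n) = (t x) ^+ n.
Proof. exact: rmorphXn. Qed.
Lemma gal_M (t : gal_of {:L}) x y : t (x * y) = t x * t y.
Proof. exact: rmorphM. Qed.
Lemma gal_D (t : gal_of {:L}) x y : t (x + y) = t x + t y.
Proof. exact: rmorphD. Qed.
Lemma gal_B (t : gal_of {:L}) x y : t (x - y) = t x - t y.
Proof. exact: rmorphB. Qed.
Lemma gal_sum (t : gal_of {:L}) (I : Type) (r : seq I) (P : pred I) (F : I -> L) :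
  t (\sum_(i <- r | P i) F i) = \sum_(i <- r | P i) t (F i).
Proof. exact: rmorph_sum. Qed.

Lemma gal_scale (t : gal_of {:L}) (c : K) x : t (c *: x) = c *: t x.
Proof. exact: linearZ. Qed.

Lemma gal_alg (t : gal_of {:L}) (c : K) : t c%:A = c%:A.
Proof. by rewrite rmorph_alg. Qed.

Lemma inv_v (t : gal_of {:L}) y : y != 0 -> vL (t y) = vL y.
Proof.
move=> y0; set m := vL y.
have cm0 : (cc ^ (- m))%:A != 0 :> L by apply: alg_neq0; rewrite expfz_neq0.
have vcm : vL (cc ^ (- m))%:A = - (p%:Z * m).
  by rewrite hKL ?expfz_neq0 // (vXz hvK) // hcc mulr1 mulrN.
set z := y ^+ p * (cc ^ (- m))%:A.
have z0 : z != 0 by rewrite mulf_neq0 // expf_neq0.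
have vz : vL z = 0 by rewrite (vM hvL) ?expf_neq0 // (vX hvL) // vcm /m; lia.
have hz : vge vL (t z) 0 by apply: inv_O; right; rewrite vz.
have hz' : vge vL (t z^-1) 0 by apply: inv_O; right; rewrite (vV hvL) // vz.
have tz0 := gal_neq0 t z0.
rewrite fmorphV (vgeE vL) ?invr_eq0 // (vV hvL) // in hz'.
rewrite (vgeE vL) // in hz.
have e : vL (t z) = 0 by apply/le_anti; rewrite hz andbT -oppr_ge0; exact: hz'.
have tz : t z = (t y) ^+ p * (cc ^ (- m))%:A.
  by rewrite /z rmorphM rmorphXn; congr (_ * _); exact: gal_alg.
move: e; rewrite tz (vM hvL) ?expf_neq0 ?gal_neq0 //.
rewrite vcm (vX hvL) ?gal_neq0 // => e.
have p0 := prime_gt0 pp.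
have : p%:Z * (vL (t y) - m) = 0 by lia.
move/eqP; rewrite mulf_eq0 => /orP[/eqP|/eqP]; lia.
Qed.

Lemma inv_vge (t : gal_of {:L}) y N : vge vL y N -> vge vL (t y) N.
Proof.
case=> [->|h]; first by rewrite rmorph0; left.
have [->|y0] := eqVneq y 0; first by rewrite rmorph0; left.
by right; rewrite inv_v.
Qed.


Lemma in_alg_nat (n : nat) : (n%:R : K)%:A = n%:R :> L.
Proof. by rewrite -in_algE rmorph_nat. Qed.

Lemma algM (a b : K) : (a * b)%:A = a%:A * b%:A :> L.
Proof. by rewrite -!in_algE rmorphM. Qed.

Lemma algB (a b : K) : (a - b)%:A = a%:A - b%:A :> L.
Proof. by rewrite -!in_algE rmorphB. Qed.

Hypothesis hpK : vge vK p%:R 1.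

Lemma hpL : vge vL (p%:R : L) 1.
Proof.
rewrite -in_alg_nat; apply: (vgeW (N := p%:Z * 1)); last exact: vge_alg.
have := prime_gt0 pp; lia.
Qed.

Variable (s : gal_of {:L}).
Hypothesis s1 : s != 1%g.

Definition Dop : 'End(L) := (s : 'End(L)) - 1.

Lemma DopE x : Dop x = s x - x.
Proof. by rewrite /Dop add_lfunE opp_lfunE id_lfunE. Qed.

Lemma DopS k x : (Dop ^+ k.+1) x = Dop ((Dop ^+ k) x).
Proof. by rewrite exprSr lfun_mulE. Qed.

Lemma Dop_sum (I : Type) (r : seq I) (P : pred I) (F : I -> L) :
  Dop (\sum_(i <- r | P i) F i) = \sum_(i <- r | P i) Dop (F i).
Proof. exact: linear_sum. Qed.
Lemma DopZ (c : K) x : Dop (c *: x) = c *: Dop x.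
Proof. exact: linearZ. Qed.
Lemma DopB x y : Dop (x - y) = Dop x - Dop y.
Proof. exact: linearB. Qed.
Lemma Dop0 : Dop 0 = 0.
Proof. exact: linear0. Qed.

Lemma Dop_alg (c : K) x : Dop (c%:A * x) = c%:A * Dop x.
Proof. by rewrite !mulr_algl linearZ. Qed.

Lemma DopX_alg k (c : K) x : (Dop ^+ k) (c%:A * x) = c%:A * (Dop ^+ k) x.
Proof. by rewrite !mulr_algl linearZ. Qed.

Lemma Dop_mul (x y : L) : Dop (x * y) = Dop x * s y + x * Dop y.
Proof. rewrite !DopE gal_M; ring. Qed.

Lemma Dop_algc (c : K) : Dop c%:A = 0.
Proof. by rewrite DopE gal_alg subrr. Qed.

Lemma spi : s pi != pi.
Proof.
apply: contra s1 => /eqP e; apply/gal_eqP => z _.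
have [c ->] := decomp z; rewrite gal_id /dsum gal_sum; apply: eq_bigr => i _.
by rewrite gal_scale gal_X e.
Qed.

Definition beta := vL (s pi - pi) - 1.
Definition uu := s pi / pi.

Lemma spi_u : s pi = uu * pi.
Proof. by rewrite /uu divfK. Qed.

Lemma spi_ne0 : s pi - pi != 0.
Proof. by rewrite subr_eq0 spi. Qed.

Lemma u0 : vL uu = 0.
Proof.
rewrite /uu (vM hvL) ?invr_eq0 ?gal_neq0 // (vV hvL) // inv_v // hpi; lia.
Qed.

Lemma uu_ne0 : uu != 0.
Proof. by rewrite /uu mulf_neq0 ?invr_eq0 ?gal_neq0. Qed.

Lemma vu_1 : vL (uu - 1) = beta /\ uu - 1 != 0.
Proof.
have e : s pi - pi = (uu - 1) * pi by rewrite spi_u; ring.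
have n0 : uu - 1 != 0 by apply: contraNneq spi_ne0; rewrite e => ->; rewrite mul0r.
split=> //; rewrite /beta e (vM hvL) // hpi; lia.
Qed.

Lemma beta_ge0 : 0 <= beta.
Proof.
have [<- n0] := vu_1.
have h : vge vL (uu - 1) 0 by apply: (vgeB hvL); right; rewrite ?u0 ?(v1 hvL).
by move: h; rewrite (vgeE vL).
Qed.

Lemma DopX_pi (j : nat) : Dop (pi ^+ j) = pi ^+ j * (uu ^+ j - 1).
Proof. by rewrite DopE gal_X spi_u exprMn; ring. Qed.

Lemma upow_ge (j : nat) : vge vL (uu ^+ j - 1) beta.
Proof.
have hu : vge vL uu 0 by right; rewrite u0.
have he : vge vL (uu - 1) beta by right; rewrite (proj1 vu_1).
elim: j => [|j IH]; first by rewrite expr0 subrr; left.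
have -> : uu ^+ j.+1 - 1 = uu * (uu ^+ j - 1) + (uu - 1) by rewrite exprS; ring.
apply: (vgeD hvL) => //; have := vgeM hvL hu IH; by rewrite add0r.
Qed.


Lemma pos1 (x : int) : 1 <= p%:Z * x -> 1 <= x.
Proof.
move=> h; have p0 := prime_gt0 pp; case: (lerP 1 x) => // hx.
have : p%:Z * x <= p%:Z * 0 by apply: ler_wpM2l; lia.
lia.
Qed.

Lemma Dbound N z : vge vL z N -> vge vL (Dop z) (N + beta).
Proof.
case=> [->|hz]; first by rewrite Dop0; left.
have [->|z0] := eqVneq z 0; first by rewrite Dop0; left.
have [c hc] := decomp z.
rewrite hc /dsum Dop_sum; apply: (vge_sum hvL) => i _.
have [->|ci] := eqVneq (c i) 0; first by rewrite scale0r Dop0; left.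
rewrite DopZ -mulr_algl DopX_pi mulrA.
have [_ dv] := dsum_val ci.
have h := vgeM hvL (vge_v vL ((c i)%:A * pi ^+ i)) (upow_ge i).
apply: (vgeW _ h); have [_ tv] := vterm i ci; rewrite -mulr_algl in tv.
rewrite tv; rewrite -hc in dv; rewrite /fv in dv; move: dv hz.
set A := vL z; set B := p%:Z * vK (c i) + (i : nat)%:Z; lia.
Qed.

Lemma Dunit w : vge vL w 0 -> vge vL (Dop w) (beta + 1).
Proof.
move=> h; have [d hd] := res_trivial h.
have -> : Dop w = Dop (w - d%:A) by rewrite DopB Dop_algc subr0.
by rewrite [beta + 1]addrC; apply: Dbound.
Qed.

Lemma s_ram : s \in ram_group vL beta.
Proof. by rewrite inE; apply/asboolP => x hx; rewrite -DopE; apply: Dunit. Qed.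

Lemma one_ram j : 1%g \in ram_group vL j.
Proof. by rewrite inE; apply/asboolP => x hx; rewrite gal_id subrr; left. Qed.

Lemma gal_iter n x : (s ^+ n)%g x = iter n s x.
Proof.
elim: n => [|n IH]; first by rewrite expg0 gal_id.
by rewrite expgSr galM ?memvf // IH.
Qed.

Hypothesis sp : (s ^+ p)%g = 1%g.

Lemma wild : 1 <= beta.
Proof.
have hu : vge vL uu 0 by right; rewrite u0.
have [d hd] := res_trivial hu.
have hy : vge vL (- (uu - d%:A)) (vL uu + 1) by rewrite u0 add0r; apply: (vgeN hvL).
have [dn0 dv] := vge_dom hvL uu_ne0 hy.
have ed : uu + - (uu - d%:A) = d%:A by ring.
rewrite ed u0 in dn0 dv.
have d0 : d != 0 by apply: contraNneq dn0 => ->; rewrite scale0r.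
have vd : vK d = 0 by move: dv; rewrite hKL //; have := prime_gt0 pp; nia.
have hdK : forall n, vge vK (d ^+ n) 0 by move=> n; right; rewrite (vX hvK) // vd mulr0.
have it : forall n, vge vL (iter n s pi - (d ^+ n)%:A * pi) 2.
  elim=> [|n IH]; first by rewrite /= expr0 scale1r mul1r subrr; left.
  set r := iter n s pi - (d ^+ n)%:A * pi.
  have e1 : iter n s pi = r + (d ^+ n)%:A * pi by rewrite /r subrK.
  have -> : iter n.+1 s pi - (d ^+ n.+1)%:A * pi =
      s r + (d ^+ n)%:A * ((uu - d%:A) * pi).
    rewrite iterS e1 gal_D gal_M gal_alg spi_u exprSr algM; ring.
  apply: (vgeD hvL); first exact: inv_vge.
  have := vgeM hvL (vge_alg (hdK n)) (vgeM hvL hd (vge_v vL pi)).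
  by rewrite hpi mulr0 add0r.
have := it p; rewrite -gal_iter sp gal_id.
have -> : pi - (d ^+ p)%:A * pi = (1 - d ^+ p)%:A * pi by rewrite algB scale1r; ring.
move=> h1.
have h2 : vge vK (1 - d ^+ p) 1.
  have [->|n0] := eqVneq (1 - d ^+ p) 0; first by left.
  right; move: h1; rewrite (vgeE vL) ?mulf_neq0 ?alg_neq0 //.
  rewrite (vM hvL) ?alg_neq0 // hKL // hpi => h; apply: pos1; lia.
have h3 := vge_binp hvK pp hpK (d := d) (or_intror (eq_ind_r (fun x => 0 <= x) (lexx 0) vd)).
have h4 : vge vK ((d - 1) ^+ p) 1.
  have -> : (d - 1) ^+ p = - (d ^+ p - 1 - (d - 1) ^+ p) - (1 - d ^+ p) by ring.
  by apply: (vgeB hvK) => //; apply: (vgeN hvK).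
have h5 : vge vK (d - 1) 1.
  have [->|n0] := eqVneq (d - 1) 0; first by left.
  right; move: h4; rewrite (vgeE vK) ?expf_neq0 // (vX hvK) // => h; exact: pos1.
have h6 : vge vL (uu - 1) 1.
  have -> : uu - 1 = (uu - d%:A) + (d - 1)%:A by rewrite algB scale1r; ring.
  apply: (vgeD hvL) => //; apply: (vgeW _ (vge_alg h5)); have := prime_gt0 pp; lia.
have [vb n0] := vu_1; move: h6; rewrite (vgeE vL) // vb //.
Qed.

Lemma Dpow_exact (j : nat) : (0 < j < p)%N -> 1 <= beta ->
  Dop (pi ^+ j) != 0 /\ vL (Dop (pi ^+ j)) = j%:Z + beta.
Proof.
move=> /andP[j0 jp] hb.
have hu : vge vL uu 0 by right; rewrite u0.
have [ve en0] := vu_1.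
have he : vge vL (uu - 1) beta by right; rewrite ve.
have rest : forall n : nat, vge vL (uu ^+ n - 1 - n%:R * (uu - 1)) (beta + beta).
  elim=> [|n IH]; first by rewrite expr0 subrr mul0r subr0; left.
  have -> : uu ^+ n.+1 - 1 - n.+1%:R * (uu - 1) =
     uu * (uu ^+ n - 1 - n%:R * (uu - 1)) + n%:R * ((uu - 1) * (uu - 1)).
    by rewrite exprS -natr1; ring.
  apply: (vgeD hvL).
    by have := vgeM hvL hu IH; rewrite add0r.
  by have := vgeM hvL (vge_nat hvL n) (vgeM hvL he he); rewrite add0r.
have ndv : ~~ (p %| j)%N.
  by apply/negP => /(dvdn_leq j0); rewrite leqNgt jp.
have [jn0 vj] := v_unit_nat hvL pp hpL ndv.
have x0 : j%:R * (uu - 1) != 0 by rewrite mulf_neq0.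
have vx : vL (j%:R * (uu - 1)) = beta by rewrite (vM hvL) // vj ve add0r.
have hr : vge vL (uu ^+ j - 1 - j%:R * (uu - 1)) (vL (j%:R * (uu - 1)) + 1).
  by apply: (vgeW _ (rest j)); rewrite vx; lia.
have [s0 sv] := vge_dom hvL x0 hr.
have eq : j%:R * (uu - 1) + (uu ^+ j - 1 - j%:R * (uu - 1)) = uu ^+ j - 1 by ring.
rewrite eq vx in s0 sv.
rewrite DopX_pi; split; first by rewrite mulf_neq0 // expf_neq0.
by rewrite (vM hvL) ?expf_neq0 // (vX hvL) // hpi mulr1 sv.
Qed.

Lemma Dexact z : z != 0 -> ~~ (p%:Z %| vL z)%Z -> 1 <= beta ->
  Dop z != 0 /\ vL (Dop z) = vL z + beta.
Proof.
move=> z0 ndv hb; set m := vL z.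
have pz0 : p%:Z != 0 by rewrite eqz_nat; have := prime_gt0 pp; case: (p).
set k := (m %/ p%:Z)%Z.
have [jn hj] : exists jn : nat, (m %% p%:Z)%Z = jn%:Z.
  by exists `|(m %% p%:Z)%Z|%N; rewrite abszE ger0_norm ?modz_ge0.
have jp : (jn < p)%N by rewrite -ltz_nat -hj ltz_pmod // ltz_nat prime_gt0.
have j0 : (0 < jn)%N.
  rewrite lt0n; apply: contra ndv => /eqP e.
  by apply/dvdz_mod0P; rewrite hj e.
have hm : m = k * p%:Z + jn%:Z by rewrite -hj /k -divz_eq.
have ck0 : (cc ^ k)%:A != 0 :> L by apply: alg_neq0; rewrite expfz_neq0.
have vck : vL (cc ^ k)%:A = p%:Z * k by rewrite hKL ?expfz_neq0 // (vXz hvK) // hcc mulr1.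
have pj0 : pi ^+ jn != 0 by rewrite expf_neq0.
set q := (cc ^ k)%:A * pi ^+ jn.
have q0 : q != 0 by rewrite mulf_neq0.
set w := z / q.
have w0 : w != 0 by rewrite mulf_neq0 ?invr_eq0.
have vw : vL w = 0.
  rewrite (vM hvL) ?invr_eq0 // (vV hvL) // (vM hvL) // vck (vX hvL) // hpi mulr1.
  rewrite -/m hm; move: (k) => kk; lia.
have ez : z = (cc ^ k)%:A * (pi ^+ jn * w) by rewrite mulrA -/q mulrC /w divfK.
have [dp0 dpv] := Dpow_exact (introT andP (conj j0 jp)) hb.
have sw0 : s w != 0 by apply: gal_neq0.
have A0 : Dop (pi ^+ jn) * s w != 0 by rewrite mulf_neq0.
have vA : vL (Dop (pi ^+ jn) * s w) = jn%:Z + beta.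
  by rewrite (vM hvL) // inv_v // vw addr0.
have hB : vge vL (pi ^+ jn * Dop w) (vL (Dop (pi ^+ jn) * s w) + 1).
  have := vgeM hvL (vge_v vL (pi ^+ jn)) (Dunit (or_intror (eq_ind_r (fun x => 0 <= x) (lexx 0) vw))).
  by rewrite vA (vX hvL) // hpi mulr1 addrA; apply: vgeW.
have [S0 Sv] := vge_dom hvL A0 hB.
have eD : Dop z = (cc ^ k)%:A * (Dop (pi ^+ jn) * s w + pi ^+ jn * Dop w).
  by rewrite {1}ez Dop_alg Dop_mul.
rewrite eD; split; first by rewrite mulf_neq0.
rewrite (vM hvL) // Sv vA vck.
rewrite -/m hm; ring.
Qed.

Lemma muln_lfunE (f : 'End(L)) n x : (f *+ n) x = f x *+ n.
Proof.
elim: n => [|n IH]; first by rewrite !mulr0n zero_lfunE.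
by rewrite !mulrS add_lfunE IH.
Qed.

Lemma Sop_iter n y : (((s : 'End(L)) ^+ n) y) = iter n s y.
Proof.
elim: n => [|n IH]; first by rewrite expr0 id_lfunE.
by rewrite exprSr lfun_mulE IH.
Qed.

Lemma Dop_binom y : (Dop ^+ p) y = - \sum_(1 <= i < p) 'C(p, i)%:R * (Dop ^+ i) y.
Proof.
have p0 := prime_gt0 pp.
have e : Dop + 1 = (s : 'End(L)) by rewrite /Dop subrK.
have := Sop_iter p y; rewrite -gal_iter sp gal_id -e exprD1n sum_lfunE.
rewrite -(big_mkord xpredT (fun i => (Dop ^+ i *+ 'C(p, i)) y)).
rewrite big_nat_recr //= big_ltn // expr0 bin0 binn !muln_lfunE id_lfunE !mulr1n.
under eq_big_nat => i _ do rewrite muln_lfunE -mulr_natl.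
set S := \sum_(1 <= i < p) _ => h.
apply/eqP; rewrite -subr_eq0 opprK; apply/eqP.
have -> : (Dop ^+ p) y + S = (y + S + (Dop ^+ p) y) - y by ring.
by rewrite h subrr.
Qed.

Lemma chain z n : z != 0 -> 1 <= beta ->
  (forall j, (j < n)%N -> ~~ (p%:Z %| vL z + j%:Z * beta)%Z) ->
  forall j, (j <= n)%N -> (Dop ^+ j) z != 0 /\ vL ((Dop ^+ j) z) = vL z + j%:Z * beta.
Proof.
move=> z0 hb hn; elim=> [|j IH] hj.
  by rewrite expr0 id_lfunE mul0r addr0.
have [n0 nv] := IH (ltnW hj).
have := hn j hj; rewrite -nv => nd.
have [d0 dv] := Dexact n0 nd hb.
rewrite DopS; split=> //; rewrite dv nv -addn1 PoszD; ring.
Qed.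

Definition Rsum y := \sum_(1 <= i < p) 'C(p, i)%:R * (Dop ^+ i) y.

Lemma binC i : (0 < i < p)%N -> ('C(p, i)%:R : L) = ('C(p, i) %/ p)%:R * (p%:R : K)%:A.
Proof. by move=> hi; rewrite in_alg_nat -natrM divnK // prime_dvd_bin. Qed.

Lemma Rsum_charp : (p%:R : K) = 0 -> forall y, Rsum y = 0.
Proof.
move=> h y; rewrite /Rsum big_seq big1 // => i; rewrite mem_index_iota => hi.
by rewrite binC ?h ?scale0r ?mulr0 ?mul0r //; case/andP: hi => h1 ->; rewrite andbT.
Qed.

Lemma Rsum_val0 : (p%:R : K) != 0 -> forall z, z != 0 -> 1 <= beta ->
  (forall i, (1 <= i < p)%N -> (Dop ^+ i) z != 0 /\ vL ((Dop ^+ i) z) = vL z + i%:Z * beta) ->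
  Rsum z != 0 /\ vL (Rsum z) = p%:Z * vK (p%:R) + vL z + beta.
Proof.
move=> hp0 z z0 hb hc.
have p1 := prime_gt1 pp.
have pL0 : (p%:R : K)%:A != 0 :> L by apply: alg_neq0.
have [d1 v1'] := hc 1%N (introT andP (conj (leqnn 1) p1)).
rewrite expr1 in d1 v1'.
rewrite /Rsum big_ltn // bin1 -in_alg_nat.
have t0 : (p%:R : K)%:A * Dop z != 0 by rewrite mulf_neq0.
have tv : vL ((p%:R : K)%:A * Dop z) = p%:Z * vK (p%:R) + vL z + beta.
  by rewrite (vM hvL) // hKL // v1' mul1r addrA.
have hr : vge vL (\sum_(2 <= i < p) 'C(p, i)%:R * (Dop ^+ i) z)
            (vL ((p%:R : K)%:A * Dop z) + 1).
  rewrite big_seq; apply: (vge_sum hvL) => i; rewrite mem_index_iota => /andP[i2 ip].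
  have i1 : (0 < i < p)%N by rewrite ip andbT; apply: leq_trans i2.
  rewrite binC //.
  have [di vi] := hc i (introT andP (conj (ltnW i2) ip)).
  have h1 := vgeM hvL (vgeM hvL (vge_nat hvL ('C(p, i) %/ p)) (vge_v vL (p%:R : K)%:A)) (vge_v vL ((Dop ^+ i) z)).
  apply: (vgeW _ h1); rewrite vi tv hKL // add0r.
  have : 2%:Z * beta <= i%:Z * beta by apply: ler_wpM2r; lia.
  set P := p%:Z * vK p%:R; set V := vL z; move: (i%:Z * beta) => ib; lia.
have [S0 Sv] := vge_dom hvL t0 hr.
by split=> //; rewrite Sv tv.
Qed.

Definition Yv := pi ^ (- ((p.-1)%:Z * beta)).

Lemma Yv0 : Yv != 0.
Proof. by rewrite expfz_neq0. Qed.

Lemma vYv : vL Yv = - ((p.-1)%:Z * beta).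
Proof. by rewrite (vXz hvL) // hpi mulr1. Qed.

Lemma chainY : 1 <= beta -> ~~ (p%:Z %| beta)%Z -> forall j, (j <= p.-1)%N ->
  (Dop ^+ j) Yv != 0 /\ vL ((Dop ^+ j) Yv) = - ((p.-1)%:Z * beta) + j%:Z * beta.
Proof.
move=> hb hnd j hj; rewrite -vYv; apply: (chain (n := p.-1) Yv0 hb) => // i hi.
rewrite vYv; apply/negP => hd.
have e : - ((p.-1)%:Z * beta) + i%:Z * beta = - ((p.-1 - i)%N%:Z * beta).
  rewrite -subzn; last exact: ltnW.
  ring.
move: hd; rewrite e rpredN Gauss_dvdzl ?cop // => /(small_dvd pp hnd) h.
have p1 := prime_gt1 pp.
have : (p.-1 - i)%N%:Z = 0 by apply: h; lia.
lia.
Qed.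

Definition kf t := ((t + (af p beta t)%:Z * beta) %/ p%:Z)%Z.
Definition lam t := (cc ^ kf t)%:A * (Dop ^+ (p.-1 - af p beta t)) Yv.

Lemma kf_spec t : ~~ (p%:Z %| beta)%Z -> p%:Z * kf t = t + (af p beta t)%:Z * beta.
Proof.
move=> hnd; have [_ hd] := af_spec pp hnd t.
by rewrite mulrC /kf divzK // addrC.
Qed.

Lemma lam_props t : 1 <= beta -> ~~ (p%:Z %| beta)%Z -> lam t != 0 /\ vL (lam t) = t.
Proof.
move=> hb hnd; have [ap _] := af_spec pp hnd t.
have hk := kf_spec t hnd.
have hj : (p.-1 - af p beta t <= p.-1)%N by apply: leq_subr.
have [d0 dv] := chainY hb hnd hj.
have ck0 : (cc ^ kf t)%:A != 0 :> L by apply: alg_neq0; rewrite expfz_neq0.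
split; first by rewrite mulf_neq0.
rewrite (vM hvL) // hKL ?expfz_neq0 // (vXz hvK) // hcc mulr1 hk dv.
have p1 := prime_gt0 pp.
rewrite -subzn; last by rewrite -ltnS prednK.
ring.
Qed.

Lemma algV (a : K) : (a^-1)%:A = (a%:A)^-1 :> L.
Proof. by rewrite -!in_algE fmorphV. Qed.

Lemma gal1 (t : gal_of {:L}) : t 1 = 1.
Proof. exact: rmorph1. Qed.

Definition Psi0 : Kgroupalg L := [ffun g => ((g == s)%:R - (g == 1%g)%:R)].

Lemma hPsi x : kg_act Psi0 x = Dop x.
Proof.
rewrite /kg_act DopE (bigD1 s) //= (bigD1 1%g) /=; last by rewrite eq_sym.
rewrite big1 => [|g /andP[gs g1]]; last by rewrite ffunE (negPf gs) (negPf g1) subrr scale0r.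
rewrite !ffunE eqxx (negPf s1) eq_sym (negPf s1) gal_id addr0 subr0 sub0r scale1r eqxx scaleNr scale1r.
by [].
Qed.

Lemma af_shift t : 1 <= beta -> ~~ (p%:Z %| beta)%Z -> (0 < af p beta t)%N ->
  af p beta (t + beta) = (af p beta t).-1 /\ kf (t + beta) = kf t.
Proof.
move=> hb hnd a0.
have [ap ad] := af_spec pp hnd t.
have [ap' ad'] := af_spec pp hnd (t + beta).
have ea : af p beta (t + beta) = (af p beta t).-1.
  apply: (good_uniq (t := t + beta) pp hnd ap') => //; first by rewrite (leq_ltn_trans (leq_pred _) ap).
  have -> : ((af p beta t).-1)%:Z * beta + (t + beta) = (af p beta t)%:Z * beta + t.
    rewrite -subn1 -subzn //; ring.
  by [].
split=> //; rewrite /kf ea; congr (_ %/ _)%Z.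
rewrite -subn1 -subzn //; ring.
Qed.

Lemma build T : 1 <= beta -> ~~ (p%:Z %| beta)%Z -> tol_ge1 T ->
  (match T with None => (Dop ^+ p) Yv = 0
   | Some T' => vge vL ((Dop ^+ p) Yv) (beta + T') end) ->
  exists (lam0 : int -> L) (Psi : nat -> Kgroupalg L),
    is_scaffold vK vL p 1 (bb beta) T lam0 Psi.
Proof.
move=> hb hnd hT hY; exists lam, (fun _ => Psi0).
have p0 := prime_gt0 pp.
split; first by move=> i _; exact: hnd.
split; first exact: hT.
split; first by move=> t; apply: lam_props.
split.
  move=> t1 t2; rewrite expn1 eqz_mod_dvd => hd.
  have [ap1 ad1] := af_spec pp hnd t1.
  have [ap2 ad2] := af_spec pp hnd t2.
  have ea : af p beta t1 = af p beta t2.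
    apply: (good_uniq (t := t2) pp hnd ap1 ap2) => //.
    have -> : (af p beta t1)%:Z * beta + t2 = ((af p beta t1)%:Z * beta + t1) - (t1 - t2) by ring.
    exact: rpredB.
  exists (cc ^ kf t1 / cc ^ kf t2).
  have [d0 _] := chainY hb hnd (leq_subr (af p beta t2) p.-1).
  rewrite /lam ea algM algV invfM mulrACA divff // mulr1.
  by [].
split.
  by move=> i _; rewrite hPsi DopE gal1 subrr.
move=> i t /andP[i1 i2].
have -> : i = 1%N by apply/eqP; rewrite eqn_leq i1 i2.
have [ap ad] := af_spec pp hnd t.
rewrite subnn expn0 mul1r /digit expn0 divn1 -/(bb beta) -/(af p beta t) modn_small //.
exists 1; split; [exact: oner_neq0 | exact: (v1 hvK) |].
rewrite scale1r mul1r hPsi.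
case: (posnP (af p beta t)) => ha.
  have e : Dop (lam t) = (cc ^ kf t)%:A * (Dop ^+ p) Yv.
    rewrite /lam Dop_alg ha subn0 -DopS prednK //.
  rewrite e.
  case: T hT hY => [T'|] hT hY /=; last by rewrite hY mulr0.
  have [l0 lv] := lam_props (t + bb beta 1) hb hnd.
  set X := (cc ^ kf t)%:A * (Dop ^+ p) Yv.
  set w := X / lam (t + bb beta 1).
  have eX : X = lam (t + bb beta 1) * w by rewrite /w mulrC divfK.
  exists w; split; last by rewrite subr0.
  have [Y0|n0] := eqVneq ((Dop ^+ p) Yv) 0.
    by rewrite /w /X Y0 mulr0 mul0r; left.
  have ck0 : (cc ^ kf t)%:A != 0 :> L by apply: alg_neq0; rewrite expfz_neq0.
  have X0 : X != 0 by rewrite mulf_neq0.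
  have w0 : w != 0 by apply: contraNneq X0 => w0; rewrite eX w0 mulr0.
  have vX' : vL X = vL (lam (t + bb beta 1)) + vL w by rewrite {1}eX (vM hvL).
  right; move: vX'; rewrite lv /X (vM hvL) // hKL ?expfz_neq0 // (vXz hvK) // hcc mulr1.
  rewrite kf_spec // ha mul0r addr0.
  move: hY; rewrite (vgeE vL) //; move: (vL ((Dop ^+ p) Yv)) (vL w) => V W hY; rewrite /bb; lia.
have [ea ek] := af_shift hb hnd ha.
have e : Dop (lam t) = lam (t + bb beta 1).
  rewrite /bb /lam Dop_alg ek ea -DopS; congr (_ * (Dop ^+ _) _).
  have : (af p beta t <= p.-1)%N by rewrite -ltnS prednK.
  move: ha; move: (af p beta t) => a; lia.
rewrite e; case: T hT hY => [T'|] hT hY //=.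
by exists 0; split; [left | rewrite subrr mulr0].
Qed.

Lemma Dp_charp : (p%:R : K) = 0 -> (Dop ^+ p) Yv = 0.
Proof. by move=> h; rewrite Dop_binom -/(Rsum Yv) Rsum_charp // oppr0. Qed.

Lemma p_ndvd : ((p%:R : K) = 0 \/ beta * (p%:Z - 1) != p%:Z * vK (p%:R)) -> 1 <= beta ->
  ~~ (p%:Z %| beta)%Z.
Proof.
move=> hc hb; apply/negP => hd.
have p1 := prime_gt1 pp.
have hn : forall j, (j < p)%N -> ~~ (p%:Z %| vL pi + j%:Z * beta)%Z.
  move=> j _; apply/negP; rewrite hpi => h1.
  have h2 : (p%:Z %| j%:Z * beta)%Z by apply: dvdz_mull.
  have : (p%:Z %| 1)%Z by have := rpredB h1 h2; rewrite addrK.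
  by rewrite dvdzE /= dvdn1 => /eqP e; move: p1; rewrite e.
have ch := chain pi0 hb hn.
have [dp0 dpv] := ch p (leqnn p).
have eb := Dop_binom pi; rewrite -/(Rsum pi) in eb.
have [hp0|hp0] := eqVneq (p%:R : K) 0.
  by move: dp0; rewrite eb Rsum_charp // oppr0 eqxx.
case: hc => [/eqP|hc]; first by rewrite (negPf hp0).
have hc' : forall i, (1 <= i < p)%N -> (Dop ^+ i) pi != 0 /\ vL ((Dop ^+ i) pi) = vL pi + i%:Z * beta.
  by move=> i /andP[_ ip]; apply: ch; apply: ltnW.
have [_ rv] := Rsum_val0 hp0 pi0 hb hc'.
move: dpv; rewrite eb (vN hvL) rv hpi => e.
move/eqP: hc; apply; move: e; set E := vK (p%:R); move: (p%:Z * E) => PE e.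
have : (p%:Z - 1) * beta = PE by rewrite -[_ * beta]addr0; lia.
by rewrite mulrC.
Qed.

Lemma char0_tol : (p%:R : K) != 0 -> 1 <= beta -> ~~ (p%:Z %| beta)%Z ->
  1 <= p%:Z * vK (p%:R) - (p%:Z - 1) * beta /\
  vge vL ((Dop ^+ p) Yv) (beta + (p%:Z * vK (p%:R) - (p%:Z - 1) * beta)).
Proof.
move=> hp0 hb hnd.
have p0 := prime_gt0 pp.
have ep : (p.-1)%:Z = p%:Z - 1 by rewrite -subn1 subzn.
have hc : forall i, (1 <= i < p)%N ->
    (Dop ^+ i) Yv != 0 /\ vL ((Dop ^+ i) Yv) = vL Yv + i%:Z * beta.
  move=> i /andP[_ ip]; rewrite vYv; apply: chainY => //.
  by rewrite -ltnS prednK.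
have [r0 rv] := Rsum_val0 hp0 Yv0 hb hc.
have eb := Dop_binom Yv; rewrite -/(Rsum Yv) in eb.
have dv : vL ((Dop ^+ p) Yv) = p%:Z * vK p%:R + vL Yv + beta by rewrite eb (vN hvL) rv.
have [d0 d0v] := chainY hb hnd (leqnn p.-1).
have hu : vge vL ((Dop ^+ p.-1) Yv) 0 by right; rewrite d0v; rewrite addrC subrr.
have Dn0 : (Dop ^+ p) Yv != 0 by rewrite eb oppr_eq0.
have := Dunit hu; rewrite -DopS prednK // (vgeE vL) // dv vYv ep => h.
split.
  move: h; set PE := p%:Z * vK (p%:R); move: ((p%:Z - 1) * beta) => Q h; lia.
right; rewrite dv vYv ep.
set PE := p%:Z * vK (p%:R); move: ((p%:Z - 1) * beta) => Q; lia.
Qed.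

End Basis.

Unset Implicit Arguments.

Theorem lemma4p1 (K : fieldType) (L : splittingFieldType K)
    (vK : K -> int) (vL : L -> int) (p : nat) (b1 : int) :
  is_normalized_dval vK -> complete_wrt vK ->
  prime p -> vge vK (p%:R) 1 -> residue_perfect vK p ->
  is_normalized_dval vL ->
  (forall a : K, a != 0 -> vL a%:A = p%:Z * vK a) ->
  galois 1 {:L} -> \dim {:L} = p ->
  lower_break vL p 1 1 b1 ->
  (p \in [pchar K] -> galois_scaffold vK vL p 1 None) /\
  ([pchar K] =i pred0 -> b1 * (p%:Z - 1) != p%:Z * vK p%:R ->
     1 <= p%:Z * vK p%:R - (p%:Z - 1) * b1 /\
     galois_scaffold vK vL p 1 (Some (p%:Z * vK p%:R - (p%:Z - 1) * b1))).
Proof.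
move=> hvK _ pp hpK _ hvL hKL hgal hdim hlb.
have [hlb1 hlb2] := hlb.
have [_ _ [pi [pi0 hpi]]] := hvL.
have [_ _ [cc [cc0 hcc]]] := hvK.
rewrite subnn expn0 in hlb1.
have [s [sG s1]] : exists s, s \in ram_group vL b1 /\ s != 1%g.
  move/card_gt1P: hlb1 => [x [y [xi yi xy]]].
  case: (eqVneq x 1%g) => [x1|x1]; last by exists x.
  by exists y; split=> //; rewrite -x1 eq_sym.
have sp : (s ^+ p)%g = 1%g.
  have sG' : s \in galoisG {:L} 1%AS.
    by rewrite gal_kHom ?sub1v // k1HomE; exact: ahomWin.
  have <- : #|galoisG {:L} 1%AS| = p by rewrite -galois_dim // dimv1 divn1.
  exact: cyclic.expg_cardG.
set be := beta vL pi s.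
have hb1 : b1 <= be.
  have hp0 : vge vL pi 0 by right; rewrite hpi.
  move: sG; rewrite inE => /asboolP /(_ pi hp0).
  case=> [/eqP|h]; first by rewrite (negPf (spi_ne0 pp hvL hKL hdim pi0 hpi cc0 hcc s1)).
  rewrite /be /beta; move: h; move: (vL _) => V h; lia.
have hb2 : be <= b1.
  apply: hlb2; rewrite subnn expn0; apply/card_gt1P; exists 1%g, s; split=> //.
    exact: one_ram.
  exact: (s_ram hvK pp hvL hKL hdim pi0 hpi cc0 hcc s1).
  by rewrite eq_sym.
have eb : be = b1 by apply/le_anti; rewrite hb1 hb2.
have hw : 1 <= be := wild hvK pp hvL hKL hdim pi0 hpi cc0 hcc hpK s1 sp.
have hlbi : forall i, (1 <= i <= 1)%N -> lower_break vL p 1 i (bb be i).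
  move=> i /andP[i1 i2]; have -> : i = 1%N by apply/eqP; rewrite eqn_leq i1 i2.
  by rewrite /bb eb.
split.
  move=> hch; have p0K : (p%:R : K) = 0 by apply: pcharf0.
  have nd := p_ndvd hvK pp hvL hKL hdim pi0 hpi cc0 hcc hpK s1 sp (or_introl p0K) hw.
  exists (bb be); split; first by rewrite /bb eb; move: hlbi; rewrite /bb eb.
  apply: (build hvK pp hvL hKL hdim pi0 hpi cc0 hcc hpK s1) => //.
  exact: Dp_charp.
move=> hch hne.
have p0K : (p%:R : K) != 0.
  apply/negP => /eqP h; have := hch p; rewrite !inE pp h eqxx /=; by [].
have hne' : be * (p%:Z - 1) != p%:Z * vK p%:R by rewrite eb.
have nd := p_ndvd hvK pp hvL hKL hdim pi0 hpi cc0 hcc hpK s1 sp (or_intror hne') hw.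
have [t1 tv] := char0_tol hvK pp hvL hKL hdim pi0 hpi cc0 hcc hpK s1 sp p0K hw nd.
rewrite -eb; split=> //.
exists (bb be); split; first by [].
by apply: (build hvK pp hvL hKL hdim pi0 hpi cc0 hcc hpK s1) => //.
Qed.
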